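(* Let $x,y$ be non-commuting indeterminates and $C=xyx^{-1}y^{-1}$. Let $(R_n)_{n\in\mathbb Z}$ be the solution of $$R_{n+1}CR_{n-1}=R_n^2+1\qquad(n\in\mathbb Z)$$ with $R_0=yxy^{-1}$ and $R_1=y$. Set $$y_1=R_1R_0^{-1},\qquad y_2=R_1^{-1}R_0^{-1},\qquad y_3=R_1^{-1}R_0.$$ Then, as formal power series in a central variable $t$, $$\sum_{n\ge0}t^nR_n=\Big(1-t\big(1-t(1-ty_3)^{-1}y_2\big)^{-1}y_1\Big)^{-1}R_0.$$
   Context: Work in the free skew field (non-commutative rational functions) over $\mathbb C$ generated by $x,y$. Formal power series in $t$ with coefficients in this skew field are used, with $t$ commuting with everything. The inverse $(1-tA)^{-1}$ means $\sum_{k\ge0}t^kA^k$. *)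

(* Defs.v *)
From HB Require Import structures.
From mathcomp Require Import all_boot all_order all_algebra.
Set Implicit Arguments. Unset Strict Implicit. Unset Printing Implicit Defensive.
Import Order.TTheory GRing.Theory Num.Theory.
Local Open Scope ring_scope.

(* Formal power series in a central variable t over a (possibly
   non-commutative) ring D, represented by their coefficient sequences:
   f represents sum_n t^n f n. *)
Definition pseries (D : Type) := nat -> D.

Section PS.
Variable D : pzRingType.

Definition ps_const (a : D) : pseries D := fun n => if n is 0 then a else 0.

(* Cauchy product; t is central, so (f*g)_n = sum_{i+j=n} f_i g_j
   (order of the factors preserved). *)
Definition ps_mul (f g : pseries D) : pseries D :=
  fun n => \sum_(i < n.+1) f i * g (n - i)%N.

Definition ps_pow (A : pseries D) (k : nat) : pseries D :=
  iter k (ps_mul A) (ps_const 1).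

(* (1 - tA)^{-1} := sum_{k>=0} t^k A^k ; the coefficient of t^n is
   sum_{k<=n} (A^k)_{n-k}. *)
Definition ps_geom (A : pseries D) : pseries D :=
  fun n => \sum_(k < n.+1) ps_pow A k (n - k)%N.
End PS.

(* Main.v *)
Require Import Defs.
From HB Require Import structures.
From mathcomp Require Import all_boot all_order all_algebra.
From Stdlib Require Import FunctionalExtensionality.
Import Order.TTheory GRing.Theory Num.Theory.
Local Open Scope ring_scope.



Lemma tri_swap {D : pzRingType} (F : nat -> nat -> D) n :
  \sum_(k < n.+1) \sum_(i < (n - k).+1) F k i =
  \sum_(i < n.+1) \sum_(k < (n - i).+1) F k i.
Proof.
have E : forall G : nat -> nat -> D,
  \sum_(k < n.+1) \sum_(i < (n - k).+1) G k i =
  \sum_(k < n.+1) \sum_(i < n.+1) (if (k + i <= n)%N then G k i else 0).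
  move=> G; apply: eq_bigr => k _.
  rewrite (big_ord_widen n.+1 (G k)); last by rewrite ltnS leq_subr.
  rewrite big_mkcond.
  apply: eq_bigr => i _; rewrite ltnS leq_subRL //.
  by rewrite -ltnS ltn_ord.
rewrite (E F) exchange_big (E (fun i k => F k i)); apply: eq_bigr => i _; apply: eq_bigr => k _ /=.
by rewrite addnC.
Qed.

Lemma tri2 {D : pzRingType} (X : nat -> nat -> D) n :
  \sum_(i < n.+1) \sum_(a < i.+1) X a i =
  \sum_(a < n.+1) \sum_(b < (n - a).+1) X a (a + b)%N.
Proof.
have E1 : \sum_(i < n.+1) \sum_(a < i.+1) X a i =
   \sum_(i < n.+1) \sum_(a < n.+1) (if (a <= i)%N then X a i else 0).
  apply: eq_bigr => i _.
  rewrite (big_ord_widen n.+1 (fun a => X a i)); last by rewrite ltnS -ltnS ltn_ord.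
  rewrite big_mkcond.
  by apply: eq_bigr => a _; rewrite ltnS.
rewrite E1 exchange_big; apply: eq_bigr => a _.
have ha : (a <= n)%N by rewrite -ltnS ltn_ord.
rewrite -big_mkcond /=.
transitivity (\sum_(a <= i < n.+1) X a i).
  by rewrite big_geq_mkord; apply: eq_bigl => i.
rewrite -{1}(add0n a) big_addn subSn // big_mkord.
by apply: eq_bigr => b _; rewrite addnC.
Qed.



Definition ps_T {D : pzRingType} (f : pseries D) : pseries D :=
  fun n => if n is k.+1 then f k else 0.
Definition tsum {D : pzRingType} (g : nat -> pseries D) : pseries D :=
  fun n => \sum_(k < n.+1) g k (n - k)%N.

Lemma ps_mulCl {D : pzRingType} (a : D) f :
  ps_mul (ps_const a) f = fun n => a * f n.
Proof.
apply: functional_extensionality => n; rewrite /ps_mul big_ord_recl /= subn0.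
by rewrite big1 ?addr0 // => i _; rewrite mul0r.
Qed.

Lemma ps_mulCr {D : pzRingType} (a : D) f :
  ps_mul f (ps_const a) = fun n => f n * a.
Proof.
apply: functional_extensionality => n; rewrite /ps_mul big_ord_recr /= subnn.
rewrite big1 ?add0r // => i _.
by rewrite /ps_const; case: (n - i)%N (subn_gt0 i n) => [|m]; [rewrite ltn_ord | rewrite mulr0].
Qed.

Lemma tsum_mulr {D : pzRingType} (g : nat -> pseries D) h :
  ps_mul (tsum g) h = tsum (fun k => ps_mul (g k) h).
Proof.
apply: functional_extensionality => n; rewrite /ps_mul /tsum.
under eq_bigr => i _ do rewrite mulr_suml.
rewrite (tri2 (fun k i => g k (i - k)%N * h (n - i)%N)).
apply: eq_bigr => k _; apply: eq_bigr => b _.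
by rewrite addKn subnDA.
Qed.

Lemma tsum_mull {D : pzRingType} (g : nat -> pseries D) h :
  ps_mul h (tsum g) = tsum (fun k => ps_mul h (g k)).
Proof.
apply: functional_extensionality => n; rewrite /ps_mul /tsum.
under eq_bigr => i _ do rewrite mulr_sumr.
rewrite -(tri_swap (fun k i => h i * g k (n - i - k)%N)) /=.
by apply: eq_bigr => k _; apply: eq_bigr => b _; rewrite subnAC.
Qed.

Lemma mul_tsum {D : pzRingType} (f h : pseries D) :
  ps_mul f h = tsum (fun k => fun n => f k * h n).
Proof. by []. Qed.

Lemma ps_mulA {D : pzRingType} (f g h : pseries D) :
  ps_mul (ps_mul f g) h = ps_mul f (ps_mul g h).
Proof.
rewrite [ps_mul f g]mul_tsum tsum_mulr [ps_mul f (ps_mul g h)]mul_tsum.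
congr tsum; apply: functional_extensionality => k.
apply: functional_extensionality => n.
by rewrite /ps_mul mulr_sumr; apply: eq_bigr => i _; rewrite mulrA.
Qed.

Lemma ps_mulcA {D : pzRingType} (a : D) (f g : pseries D) :
  ps_mul (fun n => a * f n) g = fun n => a * ps_mul f g n.
Proof.
apply: functional_extensionality => n.
by rewrite /ps_mul mulr_sumr; apply: eq_bigr => i _; rewrite mulrA.
Qed.

Lemma mulDl_pt {D : pzRingType} (f g h X : pseries D) :
  (forall n, f n = g n + h n) ->
  forall n, ps_mul f X n = ps_mul g X n + ps_mul h X n.
Proof.
move=> E n; rewrite /ps_mul -big_split; apply: eq_bigr => i _.
by rewrite E mulrDl.
Qed.

Lemma mulNl_pt {D : pzRingType} (f g X : pseries D) :
  (forall n, f n = - g n) -> forall n, ps_mul f X n = - ps_mul g X n.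
Proof.
move=> E n; rewrite /ps_mul -sumrN; apply: eq_bigr => i _.
by rewrite E mulNr.
Qed.

Lemma mulDr_pt {D : pzRingType} (f g h X : pseries D) :
  (forall n, f n = g n + h n) ->
  forall n, ps_mul X f n = ps_mul X g n + ps_mul X h n.
Proof.
move=> E n; rewrite /ps_mul -big_split; apply: eq_bigr => i _.
by rewrite E mulrDr.
Qed.

Lemma ps_mulTl {D : pzRingType} (f g : pseries D) :
  ps_mul (ps_T f) g = ps_T (ps_mul f g).
Proof.
apply: functional_extensionality => n; rewrite /ps_mul /ps_T.
case: n => [|n]; first by rewrite big_ord1 mul0r.
by rewrite big_ord_recl /= mul0r add0r.
Qed.

Lemma ps_mulTr {D : pzRingType} (f g : pseries D) :
  ps_mul f (ps_T g) = ps_T (ps_mul f g).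
Proof.
apply: functional_extensionality => n; rewrite /ps_mul /ps_T.
case: n => [|n]; first by rewrite big_ord1 mulr0.
rewrite big_ord_recr /= subnn mulr0 addr0.
by apply: eq_bigr => i _ /=; rewrite subSn // -ltnS ltn_ord.
Qed.

Lemma tsum_shift {D : pzRingType} (g : nat -> pseries D) :
  tsum g = fun n => g 0%N n + ps_T (tsum (fun k => g k.+1)) n.
Proof.
apply: functional_extensionality => n; rewrite /tsum /ps_T.
case: n => [|n]; first by rewrite big_ord1 addr0.
by rewrite big_ord_recl /= subn0.
Qed.

Lemma geomL {D : pzRingType} (A : pseries D) :
  ps_geom A = fun n => ps_const 1 n + ps_T (ps_mul A (ps_geom A)) n.
Proof.
rewrite {1}/ps_geom -/(tsum (ps_pow A)) tsum_shift.
by rewrite /ps_geom -/(tsum (ps_pow A)) tsum_mull.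
Qed.



Lemma geom0 {D : pzRingType} (A : pseries D) : ps_geom A 0%N = 1.
Proof. by rewrite {1}geomL /= addr0. Qed.

Lemma geomS {D : pzRingType} (A : pseries D) n :
  ps_geom A n.+1 = ps_mul A (ps_geom A) n.
Proof. by rewrite {1}geomL /= add0r. Qed.

Lemma zmod_rearr {V : zmodType} (X Y g a b : V) :
  X = Y + g - a - b -> g = X - Y + a + b.
Proof. move=> ->. rewrite [Y + g]addrC. rewrite (addrAC (g + Y - a)) (addrAC (g + Y)) addrK.
rewrite (addrAC (g - a)) subrK subrK //. Qed.

Lemma zmod2 {V : zmodType} (b c m a1 a2 : V) :
  b + c - m - b + a1 + a2 = a1 + a2 + c - m.
Proof.
rewrite (addrAC (b + c)) (addrC b c) addrK.
by rewrite -addrA addrC addrA.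
Qed.

Lemma series_rec {D : pzRingType} (y1 y2 y3 : D) :
  let Gm := ps_geom (ps_mul (ps_geom (ps_mul (ps_geom (ps_const y3)) (ps_const y2)))
                    (ps_const y1)) in
  Gm 0%N = 1 /\ Gm 1%N = y1 /\
  forall n, Gm n.+2 = (y1 + y2 + y3) * Gm n.+1 - y3 * y1 * Gm n.
Proof.
set H := ps_geom (ps_const y3).
set B := ps_mul H (ps_const y2).
set G := ps_geom B.
set A := ps_mul G (ps_const y1).
set Gm := ps_geom A => /=.
have hH0 : H 0%N = 1 by rewrite /H geom0.
have hHS n : H n.+1 = y3 * H n by rewrite /H geomS ps_mulCl.
have hB n : B n = H n * y2 by rewrite /B ps_mulCr.
have hB0 : B 0%N = y2 by rewrite hB hH0 mul1r.
have hBS n : B n.+1 = y3 * B n by rewrite !hB hHS mulrA.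
set V := fun n => y1 * Gm n.
set W := ps_mul G V.
have hGm0 : Gm 0%N = 1 by rewrite /Gm geom0.
have hAGm : ps_mul A Gm = W by rewrite /A ps_mulA ps_mulCl.
have hGmS n : Gm n.+1 = W n by rewrite /Gm geomS -/Gm hAGm.
have hGm : Gm = fun n => ps_const 1 n + ps_T W n.
  by rewrite {1}/Gm geomL -/Gm hAGm.
have hb n : ps_mul B Gm n = B n + W n - V n.
  rewrite (@mulDr_pt _ Gm (ps_const 1) (ps_T W) B); last by move=> k; rewrite {1}hGm.
  rewrite ps_mulCr mulr1 ps_mulTr /W -ps_mulA -ps_mulTl.
  rewrite (@mulDl_pt _ _ G (fun n => - ps_const 1 n)); last first.
    move=> k; have -> : G k = ps_const 1 k + ps_T (ps_mul B G) k by rewrite {1}/G geomL.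
    by rewrite addrC addKr.
  rewrite (@mulNl_pt _ (fun n => - ps_const 1 n) (ps_const 1) V) // ps_mulCl.
  by rewrite mul1r addrA.
have hc n : ps_mul B Gm n.+1 = y2 * Gm n.+1 + y3 * ps_mul B Gm n.
  rewrite (@mulDl_pt _ B (ps_const y2) (ps_T (fun k => y3 * B k))); last first.
    by case=> [|k] /=; rewrite ?hB0 ?addr0 ?hBS ?add0r.
  by rewrite ps_mulCl ps_mulTl ps_mulcA.
split; first by [].
split; first by rewrite hGmS /W /ps_mul big_ord1 /G geom0 mul1r /V hGm0 mulr1.
move=> n.
have E := hc n.
rewrite !hb hBS -!hGmS /V in E.
idtac.
have E2 : y3 * (B n + Gm n.+1 - y1 * Gm n) =
   y3 * B n + Gm n.+2 - y1 * Gm n.+1 - y2 * Gm n.+1.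
  by rewrite E (addrC (y2 * Gm n.+1)) addrK.
rewrite (zmod_rearr _ _ _ _ _ E2) !mulrDr !mulrN !mulrDl mulrA.
exact: zmod2.
Qed.



Lemma step_lemma {D : unitRingType} (a b c C : D) :
  a \is a GRing.unit -> b \is a GRing.unit -> C \is a GRing.unit ->
  c \is a GRing.unit ->
  b * C * a = a * b -> c * C * a = b ^+ 2 + 1 ->
  [/\ c = (b / a + b^-1 / a + b^-1 * a) * b - C * a,
      c * C * b = b * c &
      c / b + c^-1 / b + c^-1 * b = b / a + b^-1 / a + b^-1 * a].
Proof.
move=> au bu Cu cu Q rec.
have hCa : C * a = b^-1 * (a * b).
  by rewrite -[LHS](mulKr bu); congr (_ * _); rewrite mulrA Q.
have Cau : C * a \is a GRing.unit by rewrite unitrMl.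
have h1 : c = (b / a + b^-1 / a + b^-1 * a) * b - C * a.
  apply: (mulIr Cau).
  rewrite mulrA rec mulrBl.
  rewrite -[_ * b * (C * a)]mulrA [b * (C * a)]mulrA Q hCa.
  have sq : b^-1 * (a * b) * (b^-1 * (a * b)) = b^-1 * a * (a * b).
    by rewrite mulrA (mulrA b^-1 a b) mulrK.
  rewrite sq !mulrDl -(mulrA b) (mulKr au) -(mulrA b^-1) (mulKr au) (mulVr bu).
  by rewrite addrK expr2.
have e1 : c * C = (b ^+ 2 + 1) / a by rewrite -rec (mulrK au).
have e2' : a^-1 * b * C * a = b by rewrite -!mulrA (mulrA b) Q (mulKr au).
have e2 : a^-1 * b * C = b / a by rewrite -[in RHS]e2' (mulrK au).
have h2 : c * C * b = b * c.
  apply: (mulIr Cu).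
  have L : c * C * b * C = (b ^+ 2 + 1) * (b / a).
    by rewrite e1 -!mulrA (mulrA a^-1) e2.
  have R' : b * c * C = b * ((b ^+ 2 + 1) / a) by rewrite -mulrA e1.
  rewrite L R' !mulrA; congr (_ * _).
  by rewrite mulrDl mulrDr mul1r mulr1 -exprS -exprSr.
have hc : c = (b + b^-1) / a * b.
  rewrite {1}h1 hCa !mulrDl mulrA addrK.
  by [].
have hcb : c / b = (b + b^-1) / a by rewrite hc (mulrK bu).
split => //.
apply: (mulrI cu).
rewrite !mulrDr hcb !(mulrA c c^-1) (mulrV cu) !mul1r.
rewrite (mulrA c b^-1 a) hcb divrK //.
have -> : c * ((b + b^-1) / a) = c * (b / a) + c * (b^-1 / a) by rewrite mulrDl mulrDr.
by rewrite -[LHS]addrA [b^-1 + b]addrC.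
Qed.



Theorem theorem3p3 (D : unitRingType)
  (Ddiv : forall a : D, a != 0 -> a \is a GRing.unit)
  (Dchar0 : [pchar D] =i pred0)
  (x y : D) (hx : x != 0) (hy : y != 0)
  (R : int -> D)
  (hR0 : R 0 = y * x * y^-1) (hR1 : R 1 = y)
  (hRnz : forall n : int, R n != 0)
  (hrec : forall n : int,
      R (n + 1) * (x * y * x^-1 * y^-1) * R (n - 1) = R n ^+ 2 + 1) :
  let y1 := R 1 * (R 0)^-1 in
  let y2 := (R 1)^-1 * (R 0)^-1 in
  let y3 := (R 1)^-1 * R 0 in
  (fun n : nat => R (Posz n)) =
  ps_mul
    (ps_geom
       (ps_mul
          (ps_geom (ps_mul (ps_geom (ps_const y3)) (ps_const y2)))
          (ps_const y1)))
    (ps_const (R 0)).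
Proof.
move=> y1 y2 y3.
set C := x * y * x^-1 * y^-1.
have xu := Ddiv _ hx.
have yu := Ddiv _ hy.
have Ru n : R n \is a GRing.unit := Ddiv _ (hRnz n).
have Cu : C \is a GRing.unit.
  by rewrite /C unitrMl ?unitrV // unitrMl ?unitrV // unitrMl.
have hrec' (n : nat) : R (n.+2)%:Z * C * R n%:Z = R (n.+1)%:Z ^+ 2 + 1.
  have := hrec (n.+1)%:Z.
  have -> : (n.+1)%:Z + 1 = (n.+2)%:Z by rewrite -[1]/(Posz 1) -PoszD addn1.
  by have -> : (n.+1)%:Z - 1 = n%:Z by rewrite -addn1 PoszD addrK.
have hR0' : R (Posz 0) = y * x * y^-1 := hR0.
have hR1' : R (Posz 1) = y := hR1.
have Q0 : R (Posz 1) * C * R (Posz 0) = R (Posz 0) * R (Posz 1).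
  rewrite hR0' hR1' /C !mulrA !(divrK yu) (divrK xu) (mulrK yu).
  by [].
have Q (n : nat) : R (n.+1)%:Z * C * R n%:Z = R n%:Z * R (n.+1)%:Z.
  elim: n => [|n IH] //.
  by have [_ h _] := step_lemma _ _ _ _ (Ru _) (Ru _) Cu (Ru _) IH (hrec' n).
pose Phi (n : nat) := R (n.+1)%:Z / R n%:Z + (R (n.+1)%:Z)^-1 / R n%:Z
   + (R (n.+1)%:Z)^-1 * R n%:Z.
have rec2 (n : nat) : R (n.+2)%:Z = Phi n * R (n.+1)%:Z - C * R n%:Z.
  by have [h _ _] := step_lemma _ _ _ _ (Ru _) (Ru _) Cu (Ru _) (Q n) (hrec' n).
have PhiS (n : nat) : Phi n.+1 = Phi n.
  by have [_ _ h] := step_lemma _ _ _ _ (Ru _) (Ru _) Cu (Ru _) (Q n) (hrec' n).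
have PhiL (n : nat) : Phi n = y1 + y2 + y3.
  by elim: n => [|n IH] //; rewrite PhiS.
have CM : C = y3 * y1.
  have E : (R (Posz 1))^-1 * R (Posz 0) * R (Posz 1) = C * R (Posz 0).
    by rewrite -mulrA -Q0 mulrA mulrA (mulVr (Ru _)) mul1r.
  by rewrite /y3 /y1 mulrA E (mulrK (Ru _)).
have [G0 [G1 GS]] := series_rec y1 y2 y3.
apply: functional_extensionality => n.
rewrite ps_mulCr /=.
set Gm := ps_geom _ in G0 G1 GS *.
suff : R n%:Z = Gm n * R 0 /\ R (n.+1)%:Z = Gm n.+1 * R 0 by case.
elim: n => [|n [IH0 IH1]].
  by rewrite G0 G1 mul1r /y1 (divrK (Ru _)).
split => //.
by rewrite rec2 PhiL CM IH1 IH0 GS mulrBl !mulrA.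
Qed.
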